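(* Let $q\in\mathbb{N}$, $q>1$. For $P\ge2$, $N\ge1$ and integers $n>2$ let \[ \Delta_{P,N}^{(2,3)}(n)=\sum_{\substack{d,v\ge1:\ dv^2=n^2-4\\ p\mid v\Rightarrow p\le P}}\frac1v\sum_{\substack{l\ge1:\\ p\mid l\Rightarrow p\le P}}\frac{\chi_d(l)}{l}\big(e^{-l/N}-1\big), \] where $p$ denotes primes. Then for $P\ge2$ and $x,N\ge1$, \[ \Big(\frac1x\sum_{2<n\le x}\big|\Delta_{P,N}^{(2,3)}(n)\big|^{2q}\Big)^{1/(2q)}\ll N^{-1/2}+\sum_{\substack{l>\sqrt N:\\ p\mid l\Rightarrow p\le P}}\frac1l . \]
   Context: Sums over $d$ run over positive non-square discriminants, i.e. positive integers $d$, not perfect squares, with $d\equiv0,1\pmod4$; $v$ runs over positive integers. For such $d$, $\chi_d:\mathbb{Z}\to\{0,\pm1\}$ is the completely multiplicative function with: for odd primes $p$, $\chi_d(p)=0$ if $p\mid d$, $1$ if $p\nmid d$ and $x^2\equiv d\pmod p$ is solvable, $-1$ if insolvable; $\chi_d(2)=1,-1,0$ according as $d\equiv1\pmod 8$, $d\equiv5\pmod8$, $d\equiv0\pmod4$; $\chi_d(-1)=1$. *)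

(* Defs.v *)
From Stdlib Require Import Reals.
From Coquelicot Require Import Coquelicot.
From mathcomp Require Import ssreflect ssrfun ssrbool eqtype ssrnat seq div fintype prime.

Open Scope R_scope.

Definition leRb (a b : R) : bool := if Rle_dec a b then true else false.
Definition ltRb (a b : R) : bool := if Rlt_dec a b then true else false.

Definition smooth (P : R) (l : nat) : bool :=
  (0 < l)%N && all (fun p => leRb (INR p) P) (primes l).

Definition is_disc (d : nat) : bool :=
  [&& (0 < d)%N, ((d %% 4 == 0) || (d %% 4 == 1))%N
    & ~~ [exists i : 'I_d.+1, (i * i == d)%N]].

Definition chi_prime (d p : nat) : R :=
  if p == 2%N then
    (if (d %% 8 == 1)%N then 1 else if (d %% 8 == 5)%N then -1 else 0)
  else if (p %| d)%N then 0
  else if [exists x : 'I_p, ((x * x) %% p == d %% p)%N] then 1 else -1.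

Definition chi (d l : nat) : R :=
  foldr (fun p acc => chi_prime d p ^ logn p l * acc) 1 (primes l).

Definition sumR (s : seq nat) (f : nat -> R) : R :=
  foldr (fun i acc => f i + acc) 0 s.

Definition inner_sum (P N : R) (d : nat) : R :=
  Series (fun l => if smooth P l then chi d l / INR l * (exp (- INR l / N) - 1) else 0).

(* Delta23^{(2,3)}_{P,N}(n): sum over d, v >= 1 with d v^2 = n^2 - 4, d a positive
   non-square discriminant, v P-smooth; v ranges in [1, n^2] (v^2 <= n^2 - 4). *)
Definition Delta23 (P N : R) (n : nat) : R :=
  sumR (iota 1 (n * n))
    (fun v => if [&& (v * v %| n * n - 4)%N, is_disc ((n * n - 4) %/ (v * v))%N
                    & smooth P v]
              then / INR v * inner_sum P N ((n * n - 4) %/ (v * v))%N else 0).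

Definition sum_n_le (x : R) (f : nat -> R) : R :=
  sumR (iota 3 (Z.to_nat (up x))) (fun n => if leRb (INR n) x then f n else 0).

Definition rpow (a r : R) : R := if Rle_dec a 0 then 0 else Rpower a r.

Definition tail_sum (P N : R) : R :=
  Series (fun l => if ltRb (sqrt N) (INR l) && smooth P l then / INR l else 0).

(* Main.v *)
Require Import Defs.
From HB Require Import structures.
From Stdlib Require Import Reals Lra Lia Psatz ZArith.
From Coquelicot Require Import Coquelicot.
From mathcomp Require Import ssreflect ssrfun ssrbool eqtype ssrnat seq div fintype prime bigop path.
Open Scope R_scope.

Lemma Rplus_assoc' : associative Rplus.
Proof. move=> x y z; lra. Qed.
HB.instance Definition _ := Monoid.isComLaw.Build R 0 Rplus Rplus_assoc' Rplus_comm Rplus_0_l.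
Lemma Rmult_assoc' : associative Rmult.
Proof. move=> x y z; ring. Qed.
HB.instance Definition _ := Monoid.isComLaw.Build R 1 Rmult Rmult_assoc' Rmult_comm Rmult_1_l.
HB.instance Definition _ := Monoid.isMulLaw.Build R 0 Rmult Rmult_0_l Rmult_0_r.
HB.instance Definition _ := Monoid.isAddLaw.Build R Rmult Rplus Rmult_plus_distr_r Rmult_plus_distr_l.

Lemma big_consR (I : Type) (s : seq I) x (f : I -> R) :
  \big[Rplus/0]_(i <- x :: s) f i = f x + \big[Rplus/0]_(i <- s) f i.
Proof. by rewrite big_cons. Qed.

Lemma big_splitR (I : Type) (s : seq I) (f g : I -> R) :
  \big[Rplus/0]_(i <- s) (f i + g i) = \big[Rplus/0]_(i <- s) f i + \big[Rplus/0]_(i <- s) g i.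
Proof. by rewrite big_split. Qed.

Lemma sumRE (s : seq nat) f : sumR s f = \big[Rplus/0]_(i <- s) f i.
Proof. elim: s => [|a s IH] /=; first by rewrite big_nil. by rewrite big_cons IH. Qed.

Section S.
Variable I : eqType.
Implicit Types (s : seq I) (f g : I -> R).

Lemma big_ler s f g : (forall i, i \in s -> f i <= g i) ->
  \big[Rplus/0]_(i <- s) f i <= \big[Rplus/0]_(i <- s) g i.
Proof.
elim: s => [|a s IH] H; first by rewrite !big_nil; lra.
rewrite !big_cons; apply: Rplus_le_compat; first by apply: H; rewrite inE eqxx.
by apply: IH => i Hi; apply: H; rewrite inE Hi orbT.
Qed.

Lemma big_ge0 s f : (forall i, i \in s -> 0 <= f i) -> 0 <= \big[Rplus/0]_(i <- s) f i.
Proof.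
elim: s => [|a s IH] H; first by rewrite !big_nil; lra.
rewrite !big_cons; apply: Rplus_le_le_0_compat; first by apply: H; rewrite inE eqxx.
by apply: IH => i Hi; apply: H; rewrite inE Hi orbT.
Qed.

Lemma big_abs s f : Rabs (\big[Rplus/0]_(i <- s) f i) <= \big[Rplus/0]_(i <- s) Rabs (f i).
Proof.
elim: s => [|a s IH]; first by rewrite !big_nil Rabs_R0; lra.
rewrite !big_cons; apply: Rle_trans (Rabs_triang _ _) _; lra.
Qed.

Lemma big_mulr s f c : \big[Rplus/0]_(i <- s) (c * f i) = c * \big[Rplus/0]_(i <- s) f i.
Proof. by rewrite big_distrr. Qed.

Lemma sum_sub_le (u t : seq I) g : uniq u -> uniq t -> {subset u <= t} ->
  (forall j, j \in t -> 0 <= g j) ->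
  \big[Rplus/0]_(j <- u) g j <= \big[Rplus/0]_(j <- t) g j.
Proof.
move=> Uu Ut Sut Hg.
rewrite [X in _ <= X](bigID (fun j => j \in u)) /=.
have -> : \big[Rplus/0]_(j <- t | j \in u) g j = \big[Rplus/0]_(j <- u) g j.
  rewrite -big_filter; apply: perm_big; apply: uniq_perm.
  - by apply: filter_uniq.
  - by [].
  by move=> j; rewrite mem_filter; case Hj: (j \in u) => //=; rewrite (Sut _ Hj).
have : 0 <= \big[Rplus/0]_(j <- t | j \notin u) g j.
  rewrite -big_filter; apply: big_ge0 => j; rewrite mem_filter => /andP[_ ?]; exact: Hg.
lra.
Qed.
End S.

Lemma sum_inj_le (I J : eqType) (s : seq I) (t : seq J) (phi : I -> J) f g :
  uniq s -> uniq t ->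
  (forall i, i \in s -> 0 <= f i) ->
  (forall j, j \in t -> 0 <= g j) ->
  (forall i, i \in s -> 0 < f i -> phi i \in t /\ f i <= g (phi i)) ->
  (forall i i', i \in s -> i' \in s -> 0 < f i -> 0 < f i' -> phi i = phi i' -> i = i') ->
  \big[Rplus/0]_(i <- s) f i <= \big[Rplus/0]_(j <- t) g j.
Proof.
move=> Us Ut Hf Hg Hmap Hinj.
rewrite (bigID (fun i => ltRb 0 (f i))) /=.
have -> : \big[Rplus/0]_(i <- s | ~~ ltRb 0 (f i)) f i = 0.
  rewrite big_seq_cond; apply: big1 => i /andP[Hi]; rewrite /ltRb.
  case: Rlt_dec => // H _; have := Hf i Hi; lra.
rewrite Rplus_0_r -big_filter.
set s' := filter _ s.
have Hs' : forall i, i \in s' -> i \in s /\ 0 < f i.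
  by move=> i; rewrite mem_filter /ltRb; case: Rlt_dec => //= ? ->.
apply: Rle_trans (_ : \big[Rplus/0]_(i <- s') g (phi i) <= _).
  by apply: big_ler => i /Hs' [Hi Hp]; case: (Hmap i Hi Hp).
rewrite -[X in X <= _](big_map phi xpredT g); apply: sum_sub_le => //.
- rewrite map_inj_in_uniq; first by apply: filter_uniq.
  by move=> i i' /Hs' [? ?] /Hs' [? ?]; apply: Hinj.
- by move=> j /mapP [i /Hs' [Hi Hp] ->]; case: (Hmap i Hi Hp).
Qed.

From mathcomp Require Import zify.

Section Arith.
Local Open Scope nat_scope.

Lemma gcd_sq x y : gcdn (x*x) (y*y) = gcdn x y * gcdn x y.
Proof.
have [g0|gp] := posnP (gcdn x y).
  move: g0 (gcdn_gt0 x y) => -> /esym /norP [].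
  by rewrite -!eqn0Ngt => /eqP -> /eqP ->; rewrite !muln0 gcdn0.
have Hx := divnK (dvdn_gcdl x y); have Hy := divnK (dvdn_gcdr x y).
set g := gcdn x y in gp Hx Hy *.
set x' := x %/ g in Hx; set y' := y %/ g in Hy.
have c : gcdn x' y' = 1.
  by apply/eqP; rewrite -(eqn_pmul2r gp) mul1n muln_gcdl Hx Hy.
rewrite -Hx -Hy.
have -> : x' * g * (x' * g) = (x' * x') * (g * g) by rewrite mulnACA.
have -> : y' * g * (y' * g) = (y' * y') * (g * g) by rewrite mulnACA.
rewrite -muln_gcdl.
have : coprime (x' * x') (y' * y') by rewrite coprimeMl !coprimeMr /coprime c.
by rewrite /coprime => /eqP ->; rewrite mul1n.
Qed.

Lemma BA4 n : 3 <= n -> 4 = n + 2 - (n - 2).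
Proof. move=> *; lia. Qed.

Lemma key_arith n v : 3 <= n -> 0 < v -> v * v %| n * n - 4 ->
  let A := n - 2 in let B := n + 2 in
  let d := gcdn (v * v) A in let e := v * v %/ d in let g := gcdn d e in
  let s1 := gcdn d v in let s2 := gcdn e v in
  [/\ 0 < g, g <= 4, s1 * s2 = v * g, s1 * s1 %| 4 * A & s2 * s2 %| 4 * B].
Proof.
move=> n3 v0 Hdv A B d e g s1 s2.
have AB : n * n - 4 = A * B.
  rewrite /A /B -(subnK (_ : 2 <= n)); last by apply: leq_trans n3.
  set k := n - 2; rewrite addnK; rewrite !(mulnDl, mulnDr); lia.
have A0 : 0 < A by rewrite /A; lia.
have d0 : 0 < d by rewrite /d gcdn_gt0 A0 orbT.
have dA : d %| A by apply: dvdn_gcdr.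
have dv : d %| v * v by apply: dvdn_gcdl.
have de : d * e = v * v by rewrite /e mulnC divnK.
set A' := A %/ d.
have HA : A = d * A' by rewrite /A' mulnC divnK.
have cop : gcdn e A' = 1.
  by apply/eqP; rewrite -(eqn_pmul2l d0) muln1 muln_gcdr de -HA.
have eB : e %| B.
  have : d * e %| d * (A' * B) by rewrite de mulnA -HA -AB.
  rewrite dvdn_pmul2l // => H.
  by rewrite -(Gauss_dvdr _ (_ : coprime e A')) //; rewrite /coprime cop.
have gd : g %| d by apply: dvdn_gcdl.
have ge : g %| e by apply: dvdn_gcdr.
have g4 : g %| 4.
  rewrite (BA4 _ n3) -/A -/B.
  apply: dvdn_sub; [exact: dvdn_trans ge eB | exact: dvdn_trans gd dA].
have g0 : 0 < g by rewrite /g gcdn_gt0 d0.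
have s1sq : s1 * s1 = d * g.
  by rewrite /s1 -gcd_sq -de /g -muln_gcdr.
have s2sq : s2 * s2 = e * g.
  by rewrite /s2 -gcd_sq -de -muln_gcdl mulnC gcdnC.
split => //.
- by apply: dvdn_leq.
- apply/eqP; rewrite -(eqn_exp2r _ _ (_ : 0 < 2)) //.
  rewrite -!mulnn mulnACA s1sq s2sq mulnACA de.
  by rewrite mulnACA.
- by rewrite s1sq mulnC; apply: dvdn_mul.
- by rewrite s2sq mulnC; apply: dvdn_mul.
Qed.

End Arith.

Definition Hs (M : nat) : R :=
  \big[Rplus/0]_(s <- iota 1 M) (if (s * s %| M)%N then / INR s else 0).
Definition Fs (n : nat) : R :=
  \big[Rplus/0]_(v <- iota 1 (n * n)) (if (v * v %| n * n - 4)%N then / INR v else 0).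

Definition trip (n v : nat) : nat * (nat * nat) :=
  let d := gcdn (v * v) (n - 2) in let e := (v * v %/ d)%N in (gcdn d e, (gcdn d v, gcdn e v)).

Lemma inv_ge0 (v : nat) : 0 <= / INR v.
Proof.
case: v => [|v]; first by rewrite /= Rinv_0; lra.
by apply/Rlt_le/Rinv_0_lt_compat/lt_0_INR; lia.
Qed.

Lemma big_prod2 (I1 I2 : Type) (r1 : seq I1) (r2 : seq I2) (F : I1 -> R) (G : I2 -> R) :
  \big[Rplus/0]_(p <- [seq (a, b) | a <- r1, b <- r2]) (F p.1 * G p.2) =
  \big[Rplus/0]_(a <- r1) F a * \big[Rplus/0]_(b <- r2) G b.
Proof.
rewrite big_allpairs /= big_distrl /=; apply: eq_bigr => a _.
by rewrite big_distrr.
Qed.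

Lemma F_le n : (3 <= n)%N -> Fs n <= 10 * (Hs (4 * (n - 2)) * Hs (4 * (n + 2))).
Proof.
move=> n3.
pose X a := if (a * a %| 4 * (n - 2))%N then / INR a else 0.
pose Y b := if (b * b %| 4 * (n + 2))%N then / INR b else 0.
pose T := [seq (g, ab) | g <- iota 1 4, ab <- [seq (a, b) | a <- iota 1 (4 * (n - 2)), b <- iota 1 (4 * (n + 2))]].
pose gf (p : nat * (nat * nat)) := INR p.1 * (X p.2.1 * Y p.2.2).
have HT : \big[Rplus/0]_(p <- T) gf p = 10 * (Hs (4 * (n - 2)) * Hs (4 * (n + 2))).
  rewrite /T (big_prod2 _ _ _ _ (fun g : nat => INR g) (fun ab => X ab.1 * Y ab.2)).
  rewrite (big_prod2 _ _ _ _ X Y).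
  have -> : \big[Rplus/0]_(i <- iota 1 4) INR i = 10.
    rewrite !big_cons big_nil /=; lra.
  by [].
rewrite -HT /Fs.
apply: (@sum_inj_le _ _ _ _ (trip n)).
- exact: iota_uniq.
- apply: allpairs_uniq; [exact: iota_uniq | | ].
  + apply: allpairs_uniq; [exact: iota_uniq | exact: iota_uniq | ].
    by move=> [? ?] [? ?] _ _ /= [-> ->].
  + by move=> [? ?] [? ?] _ _ /= [-> ->].
- by move=> v _; case: ifP => _; [apply: inv_ge0 | lra].
- move=> [g [a b]] _; rewrite /gf /X /Y /=.
  apply: Rmult_le_pos; first by apply: pos_INR.
  apply: Rmult_le_pos; (case: ifP => _; [apply: inv_ge0 | lra]).
- move=> v; rewrite mem_iota => /andP [v0 _].
  case: ifP => Hdv; last by lra.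
  move=> _.
  have := key_arith _ _ n3 v0 Hdv.
  rewrite /trip /=.
  set d := gcdn (v * v) (n - 2). set e := (v * v %/ d)%N.
  move=> [g0 g4 Heq H1 H2].
  have s10 : (0 < gcdn d v)%N by rewrite gcdn_gt0 v0 orbT.
  have s20 : (0 < gcdn e v)%N by rewrite gcdn_gt0 v0 orbT.
  split.
  + apply: allpairs_f; first by rewrite mem_iota; lia.
    apply: allpairs_f; rewrite mem_iota; apply/andP; split => //.
    * rewrite addnC addn1 ltnS; apply: leq_trans (dvdn_leq _ H1); last by lia.
      by rewrite leq_pmull.
    * rewrite addnC addn1 ltnS; apply: leq_trans (dvdn_leq _ H2); last by lia.
      by rewrite leq_pmull.
  + rewrite /gf /X /Y /= H1 H2.
    have E : INR (gcdn d v) * INR (gcdn e v) = INR v * INR (gcdn d e).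
      by rewrite -!mult_INR; apply: f_equal; exact: Heq.
    have Hv : 0 < INR v by apply: lt_0_INR; lia.
    have Hg : 0 < INR (gcdn d e) by apply: lt_0_INR; lia.
    have Hs1 : 0 < INR (gcdn d v) by apply: lt_0_INR; lia.
    have Hs2 : 0 < INR (gcdn e v) by apply: lt_0_INR; lia.
    rewrite -Rinv_mult E Rinv_mult.
    right; field; lra.
- move=> v v'; rewrite !mem_iota => /andP [v0 _] /andP [v'0 _].
  case: ifP => Hdv; last by lra.
  case: ifP => Hdv'; last by lra.
  move=> _ _.
  have := key_arith _ _ n3 v0 Hdv; have := key_arith _ _ n3 v'0 Hdv'.
  rewrite /trip /= => [[g0' _ E' _ _]] [g0 _ E _ _] [Hg Hs1 Hs2].
  apply/eqP; rewrite -(eqn_pmul2r g0) -E Hs1 Hs2 E' Hg //.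
Qed.

Lemma tangent (t u : R) (k : nat) : 0 <= t -> 0 <= u ->
  u ^ k.+1 + INR k.+1 * u ^ k * (t - u) <= t ^ k.+1.
Proof.
move=> t0 u0; elim: k => [|k IH]; first by rewrite /=; lra.
have H1 : t * (u ^ k.+1 + INR k.+1 * u ^ k * (t - u)) <= t ^ k.+2.
  by rewrite [t ^ k.+2]/=; apply: Rmult_le_compat_l.
have H2 : 0 <= INR k.+1 * u ^ k * ((t - u) * (t - u)).
  apply: Rmult_le_pos; [apply: Rmult_le_pos; [apply: pos_INR | by apply: pow_le] | exact: Rle_0_sqr].
have E : t * (u ^ k.+1 + INR k.+1 * u ^ k * (t - u)) =
  u ^ k.+2 + INR k.+2 * u ^ k.+1 * (t - u) + INR k.+1 * u ^ k * ((t - u) * (t - u)).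
  rewrite [INR k.+2]S_INR /= ; ring.
lra.
Qed.

Lemma big_lin (I : Type) (s : seq I) (a c : I -> R) u :
  \big[Rplus/0]_(i <- s) (a i - u * c i) =
  \big[Rplus/0]_(i <- s) a i - u * \big[Rplus/0]_(i <- s) c i.
Proof.
elim: s => [|x r IH]; first by rewrite !big_nil; lra.
rewrite !big_cons IH; lra.
Qed.

Lemma jensen (I : eqType) (s : seq I) (a c : I -> R) (k : nat) :
  (forall i, i \in s -> 0 <= a i) -> (forall i, i \in s -> 0 < c i) ->
  0 < \big[Rplus/0]_(i <- s) c i ->
  (\big[Rplus/0]_(i <- s) a i) ^ k.+1 <=
  (\big[Rplus/0]_(i <- s) c i) ^ k * \big[Rplus/0]_(i <- s) (a i ^ k.+1 / c i ^ k).
Proof.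
move=> Ha Hc Sc.
set SA := \big[Rplus/0]_(i <- s) a i; set SC := \big[Rplus/0]_(i <- s) c i in Sc *.
have SA0 : 0 <= SA by apply: big_ge0.
set u := SA / SC.
have u0 : 0 <= u by apply: Rmult_le_pos => //; apply/Rlt_le/Rinv_0_lt_compat.
have step : \big[Rplus/0]_(i <- s) (c i * u ^ k.+1 + INR k.+1 * u ^ k * (a i - u * c i))
   <= \big[Rplus/0]_(i <- s) (a i ^ k.+1 / c i ^ k).
  apply: big_ler => i Hi.
  have ci := Hc i Hi; have ai := Ha i Hi.
  have t0 : 0 <= a i / c i by apply: Rmult_le_pos => //; apply/Rlt_le/Rinv_0_lt_compat.
  have := tangent _ _ k t0 u0.
  have E : a i ^ k.+1 / c i ^ k = c i * (a i / c i) ^ k.+1.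
    rewrite /Rdiv Rpow_mult_distr pow_inv /=; field; repeat split; try (apply: pow_nonzero); lra.
  rewrite E => H.
  have : c i * (u ^ k.+1 + INR k.+1 * u ^ k * (a i / c i - u)) <= c i * (a i / c i) ^ k.+1.
    by apply: Rmult_le_compat_l => //; lra.
  have -> : c i * (u ^ k.+1 + INR k.+1 * u ^ k * (a i / c i - u)) =
     c i * u ^ k.+1 + INR k.+1 * u ^ k * (a i - u * c i) by field; lra.
  done.
have E2 : \big[Rplus/0]_(i <- s) (c i * u ^ k.+1 + INR k.+1 * u ^ k * (a i - u * c i))
   = SC * u ^ k.+1.
  rewrite big_split /= -big_distrl -big_distrr /=.
  have -> : \big[Rplus/0]_(i <- s) (a i - u * c i) = SA - u * SC.
    by apply: big_lin.
  have -> : SA - u * SC = 0 by rewrite /u; field; lra.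
  rewrite /SC; ring.
rewrite E2 in step.
have -> : SA ^ k.+1 = SC ^ k * (SC * u ^ k.+1).
  rewrite /u -tech_pow_Rmult /Rdiv Rpow_mult_distr pow_inv /=.
  field; repeat split; try (apply: pow_nonzero); lra.
apply: Rmult_le_compat_l => //; apply: pow_le; lra.
Qed.

Lemma big_catR (I : Type) (s : seq I) x (f : I -> R) :
  \big[Rplus/0]_(i <- s ++ [:: x]) f i = \big[Rplus/0]_(i <- s) f i + f x.
Proof. by rewrite big_cat big_seq1. Qed.

Lemma cw_step (e x : R) : 0 < e -> 2 <= x ->
  Rpower x (-(1 + e)) <= (Rpower (x - 1) (- e) - Rpower x (- e)) / e.
Proof.
move=> e0 x2.
have x0 : 0 < x by lra.
have x1 : 0 < x - 1 by lra.
set L := ln x; set L' := ln (x - 1).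
have hLL : / x <= L - L'.
  have q0 : 0 < (x - 1) / x by apply: Rdiv_lt_0_compat.
  have h1 : ln ((x - 1) / x) <= (x - 1) / x - 1.
    have := exp_ineq1_le (ln ((x - 1) / x)); rewrite exp_ln //; lra.
  have h2 : ln ((x - 1) / x) = L' - L.
    rewrite /Rdiv ln_mult //; last by apply: Rinv_0_lt_compat.
    rewrite ln_Rinv // /L /L'; ring.
  have : (x - 1) / x - 1 = - / x by field; lra.
  lra.
have E1 : Rpower x (-(1 + e)) = exp (- e * L) * / x.
  rewrite /Rpower.
  replace (-(1 + e) * ln x) with (- e * L + - L) by (rewrite /L; ring).
  by rewrite exp_plus exp_Ropp /L exp_ln.
have E2 : Rpower (x - 1) (- e) = exp (- e * L) * exp (e * (L - L')).
  rewrite /Rpower -exp_plus; f_equal; rewrite /L'; ring.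
have E3 : Rpower x (- e) = exp (- e * L) by [].
rewrite E1 E2 E3.
set P := exp (- e * L); set Q := exp (e * (L - L')).
have P0 : 0 < P by apply: exp_pos.
have hQ : 1 + e * (L - L') <= Q by apply: exp_ineq1_le.
have h : e * / x <= Q - 1.
  have : e * / x <= e * (L - L') by apply: Rmult_le_compat_l; lra.
  lra.
have h' : / x <= (Q - 1) * / e.
  have := Rmult_le_compat_r (/ e) _ _ (Rlt_le _ _ (Rinv_0_lt_compat _ e0)) h.
  by have -> : e * / x * / e = / x by field; lra.
have -> : (P * Q - P) / e = P * ((Q - 1) * / e) by field; lra.
by apply: Rmult_le_compat_l; lra.
Qed.

Lemma Rpower_pos x y : 0 < Rpower x y.
Proof. exact: exp_pos. Qed.

Lemma cw_sum (e : R) (M : nat) : 0 < e -> (1 <= M)%N ->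
  \big[Rplus/0]_(s <- iota 1 M) Rpower (INR s) (-(1 + e)) <= 1 + (1 - Rpower (INR M) (- e)) / e.
Proof.
move=> e0; elim: M => [//|M IH] _.
case: M IH => [|M] IH.
  rewrite big_cons big_nil /= /Rpower ln_1 !Rmult_0_r exp_0.
  have -> : (1 - 1) / e = 0 by field; lra.
  lra.
have IH' := IH isT.
have -> : iota 1 M.+2 = iota 1 M.+1 ++ [:: M.+2] by rewrite -[M.+2]addn1 iotaD /= add1n addn1.
rewrite big_catR.
have H := cw_step e (INR M.+2) e0.
rewrite (_ : INR M.+2 - 1 = INR M.+1) in H; last by rewrite S_INR; ring.
have : 2 <= INR M.+2 by rewrite !S_INR; have := pos_INR M; lra.
move=> /H {}H.
have : (1 - Rpower (INR M.+1) (- e)) / e + (Rpower (INR M.+1) (- e) - Rpower (INR M.+2) (- e)) / e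
   = (1 - Rpower (INR M.+2) (- e)) / e by field; lra.
lra.
Qed.

Lemma cw_sum' (e : R) (M : nat) : 0 < e ->
  \big[Rplus/0]_(s <- iota 1 M) Rpower (INR s) (-(1 + e)) <= 1 + / e.
Proof.
move=> e0; case: M => [|M]; first by rewrite big_nil; have := Rinv_0_lt_compat _ e0; lra.
apply: Rle_trans (cw_sum e M.+1 e0 isT) _.
have := Rpower_pos (INR M.+1) (- e).
have : (1 - Rpower (INR M.+1) (- e)) / e = / e - Rpower (INR M.+1) (- e) / e by field; lra.
have : 0 < Rpower (INR M.+1) (- e) / e by apply: Rdiv_lt_0_compat => //; apply: Rpower_pos.
lra.
Qed.

Definition Gc (M : nat) : R :=
  \big[Rplus/0]_(s <- iota 1 M) (if (s * s %| M)%N then 1 else 0).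

Lemma Hs_pow (M k : nat) : (0 < M)%N -> (0 < k)%N ->
  Hs M ^ k.+1 <= (1 + INR k) ^ k * Gc M.
Proof.
move=> M0 k0.
have k0' : 0 < INR k by apply: lt_0_INR; lia.
pose c s := Rpower (INR s) (-(1 + / INR k)).
have Sc : 0 < \big[Rplus/0]_(s <- iota 1 M) c s.
  case: M M0 => [//|M] _; rewrite (_ : iota 1 M.+1 = 1%N :: iota 2 M) // big_consR.
  have -> : c 1%N = 1 by rewrite /c /Rpower (_ : INR 1 = 1) // ln_1 Rmult_0_r exp_0.
  have : 0 <= \big[Rplus/0]_(s <- iota 2 M) c s by apply: big_ge0 => s _; apply/Rlt_le/Rpower_pos.
  lra.
apply: Rle_trans (jensen _ _ (fun s => if (s * s %| M)%N then / INR s else 0) c k _ _ Sc) _.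
- by move=> s _; case: ifP => _; [apply: inv_ge0 | lra].
- by move=> s _; apply: Rpower_pos.
have -> : \big[Rplus/0]_(s <- iota 1 M)
    ((if (s * s %| M)%N then / INR s else 0) ^ k.+1 / c s ^ k) = Gc M.
  rewrite /Gc; apply: eq_big_seq => s; rewrite mem_iota => /andP [s0 _].
  have sp : 0 < INR s by apply: lt_0_INR; lia.
  have ck : c s ^ k = / INR s ^ k.+1.
    rewrite /c -Rpower_pow; last by apply: Rpower_pos.
    rewrite Rpower_mult.
    have -> : -(1 + / INR k) * INR k = - INR k.+1 by rewrite S_INR; field; lra.
    by rewrite Rpower_Ropp Rpower_pow.
  rewrite ck; case: ifP => _.
    rewrite pow_inv; field; apply: pow_nonzero; lra.
  rewrite pow_i; last by lia.
  rewrite /Rdiv Rmult_0_l //.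
apply: Rmult_le_compat_r.
  by rewrite /Gc; apply: big_ge0 => s _; case: ifP => _; lra.
apply: pow_incr; split; first by apply: Rlt_le.
apply: Rle_trans (cw_sum' _ _ _) _; first by apply: Rinv_0_lt_compat.
rewrite Rinv_inv; lra.
Qed.

Lemma iotaS1 (M : nat) : iota 1 M.+1 = iota 1 M ++ [:: M.+1].
Proof. by rewrite -[M.+1]addn1 iotaD /= add1n addn1. Qed.

Lemma count_div (D M : nat) : (0 < D)%N ->
  \big[Rplus/0]_(m <- iota 1 M) (if (D %| m)%N then 1 else 0) = INR (M %/ D).
Proof.
move=> D0; elim: M => [|M IH]; first by rewrite big_nil div0n.
rewrite iotaS1 big_catR IH (divnS _ D0) plus_INR.
by case: (D %| M.+1)%N => /=; lra.
Qed.

Lemma div_INR_le (M D : nat) : (0 < D)%N -> INR (M %/ D) <= INR M * / INR D.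
Proof.
move=> D0.
have Dp : 0 < INR D by apply: lt_0_INR; lia.
have H : INR (M %/ D) * INR D <= INR M.
  rewrite -mult_INR; apply: le_INR; apply/leP; exact: leq_divM.
apply: (Rmult_le_reg_r (INR D)) => //.
rewrite Rmult_assoc Rinv_l; lra.
Qed.

Lemma inv_sq_sum (M : nat) : \big[Rplus/0]_(s <- iota 1 M) / INR (s * s) <= 2.
Proof.
have := cw_sum' 1 M Rlt_0_1.
rewrite Rinv_1 (_ : 1 + 1 = 2); last by lra.
move=> H; apply: Rle_trans H; right.
apply: eq_big_seq => s; rewrite mem_iota => /andP [s0 _].
have sp : 0 < INR s by apply: lt_0_INR; lia.
rewrite (_ : 2 = INR 2) // Rpower_Ropp Rpower_pow // mult_INR /=; f_equal; ring.
Qed.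

Lemma Gc_sum (M : nat) : \big[Rplus/0]_(m <- iota 1 M) Gc m <= 2 * INR M.
Proof.
apply: Rle_trans (_ : _ <= \big[Rplus/0]_(m <- iota 1 M)
    \big[Rplus/0]_(s <- iota 1 M) (if (s * s %| m)%N then 1 else 0)) _.
  apply: big_ler => m; rewrite mem_iota => /andP [m0 mM].
  rewrite /Gc; apply: sum_sub_le; try exact: iota_uniq.
  - by move=> s; rewrite !mem_iota => /andP [-> /=] H; lia.
  - by move=> s _; case: ifP => _; lra.
rewrite exchange_big /=.
apply: Rle_trans (_ : _ <= \big[Rplus/0]_(s <- iota 1 M) (INR M * / INR (s * s))) _.
  apply: big_ler => s; rewrite mem_iota => /andP [s0 _].
  rewrite count_div; last by rewrite muln_gt0 s0.
  by apply: div_INR_le; rewrite muln_gt0 s0.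
rewrite big_mulr.
apply: Rle_trans (Rmult_le_compat_l _ _ _ (pos_INR M) (inv_sq_sum M)) _; right; ring.
Qed.

Lemma Hs_ge0 M : 0 <= Hs M.
Proof. by apply: big_ge0 => s _; case: ifP => _; [apply: inv_ge0 | lra]. Qed.

Lemma Fs_ge0 n : 0 <= Fs n.
Proof. by apply: big_ge0 => s _; case: ifP => _; [apply: inv_ge0 | lra]. Qed.

Lemma Gc_ge0 M : 0 <= Gc M.
Proof. by apply: big_ge0 => s _; case: ifP => _; lra. Qed.

Definition C1 (K : nat) : R := 8 * 10 ^ K * (1 + INR (K + K).-1) ^ (K + K).-1.

Lemma Hs_pow2 (M K : nat) : (0 < M)%N -> (1 <= K)%N ->
  Hs M ^ (K + K) <= (1 + INR (K + K).-1) ^ (K + K).-1 * Gc M.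
Proof.
move=> M0 K1.
have -> : (K + K = ((K + K).-1).+1)%N by lia.
apply: Hs_pow => //; lia.
Qed.

Lemma shift_le (L : nat) (phi : nat -> nat) :
  (forall n, (3 <= n)%N -> (n <= L + 2)%N -> (1 <= phi n)%N /\ (phi n <= 4 * (L + 4))%N) ->
  (forall n n', (3 <= n)%N -> (3 <= n')%N -> phi n = phi n' -> n = n') ->
  \big[Rplus/0]_(n <- iota 3 L) Gc (phi n) <= \big[Rplus/0]_(m <- iota 1 (4 * (L + 4))) Gc m.
Proof.
move=> Hphi Hinj.
apply: (@sum_inj_le _ _ _ _ phi); try exact: iota_uniq.
- by move=> n _; apply: Gc_ge0.
- by move=> n _; apply: Gc_ge0.
- move=> n; rewrite mem_iota => /andP [n3 nL] _; split; last lra.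
  have nL2 : (n <= L + 2)%N by lia.
  have [h1 h2] := Hphi n n3 nL2.
  rewrite mem_iota; apply/andP; split => //; lia.
- move=> n n'; rewrite !mem_iota => /andP [n3 _] /andP [n'3 _] _ _; exact: Hinj.
Qed.

Lemma Fsum (K L : nat) : (1 <= K)%N ->
  \big[Rplus/0]_(n <- iota 3 L) Fs n ^ K <= C1 K * INR (L + 4).
Proof.
move=> K1.
set D := (1 + INR (K + K).-1) ^ (K + K).-1.
have D0 : 0 <= D by apply: pow_le; have := pos_INR (K + K).-1; lra.
apply: Rle_trans (_ : _ <= \big[Rplus/0]_(n <- iota 3 L)
   (10 ^ K / 2 * D * (Gc (4 * (n - 2)) + Gc (4 * (n + 2))))) _.
  apply: big_ler => n; rewrite mem_iota => /andP [n3 _].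
  set H1 := Hs (4 * (n - 2)); set H2 := Hs (4 * (n + 2)).
  have h10 : 0 <= H1 by apply: Hs_ge0.
  have h20 : 0 <= H2 by apply: Hs_ge0.
  have := F_le n n3; rewrite -/H1 -/H2 => HF.
  apply: Rle_trans (pow_incr _ _ K (conj (Fs_ge0 n) HF)) _.
  rewrite [(10 * _) ^ K]Rpow_mult_distr [(H1 * H2) ^ K]Rpow_mult_distr.
  have e1 : H1 ^ (K + K) = H1 ^ K * H1 ^ K by rewrite -pow_add.
  have e2 : H2 ^ (K + K) = H2 ^ K * H2 ^ K by rewrite -pow_add.
  have p1 : (0 < 4 * (n - 2))%N by lia.
  have p2 : (0 < 4 * (n + 2))%N by lia.
  have b1 := Hs_pow2 _ _ p1 K1.
  have b2 := Hs_pow2 _ _ p2 K1.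
  rewrite -/D -/H1 e1 in b1; rewrite -/D -/H2 e2 in b2.
  set a := H1 ^ K in b1 *; set b := H2 ^ K in b2 *.
  have ab : a * b <= (a * a + b * b) / 2.
    have := Rle_0_sqr (a - b); rewrite /Rsqr; lra.
  have ten : 0 <= 10 ^ K by apply: pow_le; lra.
  apply: Rle_trans (_ : 10 ^ K * (a * b) <= 10 ^ K * ((D * Gc (4 * (n - 2)) + D * Gc (4 * (n + 2))) / 2)) _.
    apply: Rmult_le_compat_l => //.
    lra.
  right; field.
have s1 := shift_le L (fun n => 4 * (n - 2))%N.
have s2 := shift_le L (fun n => 4 * (n + 2))%N.
have {s1}s1 := s1 ltac:(move=> n ? ?; split; lia) ltac:(move=> n n' ? ? ?; lia).
have {s2}s2 := s2 ltac:(move=> n ? ?; split; lia) ltac:(move=> n n' ? ? ?; lia).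
have g := Gc_sum (4 * (L + 4)).
rewrite mult_INR (_ : INR 4 = 4) in g; last by rewrite /= ; ring.
rewrite big_mulr big_split /=.
have ten : 0 <= 10 ^ K by apply: pow_le; lra.
have c0 : 0 <= 10 ^ K / 2 * D by apply: Rmult_le_pos => //; apply: Rmult_le_pos => //; lra.
apply: Rle_trans (Rmult_le_compat_l _ _ (16 * INR (L + 4)) c0 _) _.
  lra.
rewrite /C1 -/D; right; field.
Qed.


Definition smk (k l : nat) : bool := (0 < l)%N && all (fun p => p <= k)%N (primes l).

Lemma INR_expn (p e : nat) : INR (p ^ e)%N = INR p ^ e.
Proof. elim: e => [|e IH]; first by rewrite expn0. by rewrite expnS mult_INR IH. Qed.

Lemma iotaS0 (M : nat) : iota 0 M.+1 = iota 0 M ++ [:: M].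
Proof. by rewrite -[M.+1]addn1 iotaD. Qed.

Lemma geom_le (x : R) (M : nat) : 0 <= x -> 2 * x <= 1 ->
  \big[Rplus/0]_(e <- iota 0 M) x ^ e <= 2 - 2 * x ^ M.
Proof.
move=> x0 x1; elim: M => [|M IH]; first by rewrite big_nil /=; lra.
rewrite iotaS0 big_catR.
have h : x ^ M.+1 = x * x ^ M by [].
have := pow_le x M x0.
rewrite h; nra.
Qed.

Lemma smk_pos k l : smk k l -> (0 < l)%N.
Proof. by case/andP. Qed.

Lemma smooth_sum (k M : nat) :
  \big[Rplus/0]_(l <- iota 1 M) (if smk k l then / INR l else 0) <= 2 ^ k.
Proof.
elim: k M => [|k IH] M.
  apply: Rle_trans (_ : _ <= \big[Rplus/0]_(j <- [:: 1%N]) 1) _; last first.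
    by rewrite big_seq1 /=; lra.
  apply: (@sum_inj_le _ _ _ _ id); first exact: iota_uniq.
  - by [].
  - by move=> l _; case: ifP => _; [apply: inv_ge0 | lra].
  - by move=> _ _; lra.
  - move=> l _; case: ifP => [/andP [l0 Hall] _|]; last by lra.
    have l1 : l = 1%N.
      case E: (primes l) Hall => [|p s] /=.
        move=> _; have := primes_eq0 l; rewrite E eqxx => /esym H; lia.
      move=> /andP [p0 _]; have : p \in primes l by rewrite E inE eqxx.
      rewrite mem_primes => /andP [pp _]; have := prime_gt1 pp; lia.
    by rewrite l1 /=; split; [rewrite inE | rewrite Rinv_1; lra].
  - by move=> l l' _ _ _ _.
have [pr|npr] := boolP (prime k.+1); last first.
  have E : forall l, smk k.+1 l = smk k l.
    move=> l; rewrite /smk; congr (_ && _); apply: eq_in_all => p.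
    rewrite mem_primes => /and3P [pp _ _].
    apply/idP/idP => H; last by lia.
    case: (eqVneq p k.+1) => [pk|pk]; first by rewrite -pk pp in npr.
    lia.
  under eq_bigr => l _ do rewrite E.
  apply: Rle_trans (IH M) _.
  have := pow_le 2 k; rewrite [2 ^ k.+1]/=; lra.
set p := k.+1.
have p1 : (1 < p)%N by apply: prime_gt1.
have k1 : (1 <= k)%N by move: p1; rewrite /p; lia.
have pR : 2 <= INR p.
  rewrite /p S_INR; have : 1 <= INR k by apply: (le_INR 1); apply/leP.
  lra.
pose F e := (/ INR p) ^ e.
pose G l := if smk k l then / INR l else 0.
apply: Rle_trans (_ : _ <= \big[Rplus/0]_(x <- [seq (e, l') | e <- iota 0 M, l' <- iota 1 M]) (F x.1 * G x.2)) _.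
  apply: (@sum_inj_le _ _ _ _ (fun l => (logn p l, l %/ p ^ logn p l)%N)).
  - exact: iota_uniq.
  - apply: allpairs_uniq; [exact: iota_uniq | exact: iota_uniq |].
    by move=> [? ?] [? ?] _ _ /= [-> ->].
  - by move=> l _; case: ifP => _; [apply: inv_ge0 | lra].
  - move=> [e l'] _; rewrite /F /G; apply: Rmult_le_pos.
      by apply: pow_le; apply: inv_ge0.
    by case: ifP => _; [apply: inv_ge0 | lra].
  - move=> l; rewrite mem_iota => /andP [l1 lM].
    case: ifP => [/andP [l0 Hall] _|]; last by lra.
    set e := logn p l; set l' := (l %/ p ^ e)%N.
    have Hl : (l' * p ^ e)%N = l by apply: divnK; apply: pfactor_dvdnn.
    have pe0 : (0 < p ^ e)%N by rewrite expn_gt0; apply/orP; left; lia.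
    have l'0 : (0 < l')%N.
      case: (posnP l') => // H; move: Hl; rewrite H mul0n => H'; rewrite -H' in l0; done.
    have l'l : (l' <= l)%N by rewrite -Hl leq_pmulr.
    have el : (e < l)%N.
      apply: leq_trans (ltn_expl e p1) _; apply: dvdn_leq => //; apply: pfactor_dvdnn.
    split.
      apply: allpairs_f; rewrite mem_iota; apply/andP; split => //; lia.
    have sm : smk k l'.
      rewrite /smk l'0 /=; apply/allP => q; rewrite mem_primes => /and3P [qp _ ql'].
      have ql : (q %| l)%N by apply: dvdn_trans ql' _; rewrite -Hl dvdn_mulr.
      have qk : (q <= k.+1)%N.
        by apply: (allP Hall); rewrite mem_primes qp l0 ql.
      case: (eqVneq q p) => [qp'|qp']; last by rewrite /p in qp'; lia.
      exfalso.
      have : (p ^ e.+1 %| l)%N.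
        rewrite -Hl expnSr [(p ^ e * p)%N]mulnC; apply: dvdn_mul => //; by rewrite -qp'.
      by rewrite pfactor_dvdn // ltnn.
    rewrite /F /G [(_, _).1]/= [(_, _).2]/= sm.
    have El : INR l = INR l' * INR p ^ e by rewrite -Hl mult_INR INR_expn.
    have l'R : 0 < INR l' by apply: lt_0_INR; lia.
    have pR0 : 0 < INR p ^ e by apply: pow_lt; lra.
    rewrite El pow_inv; right; field; lra.
  - move=> l1 l2 _ _ _ _ [E1 E2].
    rewrite -[l1](divnK (pfactor_dvdnn p l1)) -[l2](divnK (pfactor_dvdnn p l2)) E2 E1 //.
rewrite (big_prod2 _ _ _ _ F G).
have h1 : \big[Rplus/0]_(e <- iota 0 M) F e <= 2.
  have := geom_le (/ INR p) M (inv_ge0 p) _.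
  have : 0 <= (/ INR p) ^ M by apply: pow_le; apply: inv_ge0.
  move=> H1 H2; apply: Rle_trans (H2 _) _; last lra.
  have : / INR p <= / 2 by apply: Rinv_le_contravar; lra.
  lra.
have h2 := IH M.
have h0 : 0 <= \big[Rplus/0]_(l <- iota 1 M) G l.
  by apply: big_ge0 => l _; rewrite /G; case: ifP => _; [apply: inv_ge0 | lra].
rewrite [2 ^ k.+1]/=.
apply: Rmult_le_compat => //.
by apply: big_ge0 => e _; apply: pow_le; apply: inv_ge0.
Qed.

Lemma up_nat (x : R) : 0 <= x ->
  INR (Z.to_nat (up x)) = IZR (up x) /\ x < IZR (up x) /\ IZR (up x) <= x + 1.
Proof.
move=> x0; have [h1 h2] := archimed x.
have z0 : (0 <= up x)%Z by apply: le_IZR; lra.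
by rewrite INR_IZR_INZ Z2Nat.id //; split => //; split; lra.
Qed.

Lemma smooth_smk (P : R) (k l : nat) : P <= INR k -> smooth P l -> smk k l.
Proof.
move=> Pk /andP [l0 Hall]; rewrite /smk l0 /=.
apply/allP => p Hp; have := allP Hall p Hp; rewrite /leRb.
case: Rle_dec => // H _; apply/leP; apply: INR_le; lra.
Qed.

Lemma sum_n_big (a : nat -> R) (M : nat) : sum_n a M = \big[Rplus/0]_(l <- iota 0 M.+1) a l.
Proof.
elim: M => [|M IH]; first by rewrite sum_O big_cons big_nil /=; lra.
by rewrite sum_Sn iotaS0 big_catR -IH.
Qed.

Lemma ex_series_bounded (a : nat -> R) (B : R) :
  (forall n, 0 <= a n) -> (forall M, sum_n a M <= B) -> ex_series a.
Proof.
move=> a0 HB.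
have incr : forall n, sum_n a n <= sum_n a n.+1.
  by move=> n; rewrite sum_Sn; have := a0 n.+1; rewrite /plus /=; lra.
have := Lim_seq_correct _ (ex_lim_seq_incr _ incr).
case E: (Lim_seq (sum_n a)) => [r| |] H.
- by exists r.
- have := is_lim_seq_le _ _ _ _ HB H (is_lim_seq_const B); done.
- have : forall n, sum_n a 0 <= sum_n a n.
    elim=> [|n IH]; [lra | apply: Rle_trans IH (incr n)].
  move=> H2.
  have := is_lim_seq_le _ _ _ _ H2 (is_lim_seq_const (sum_n a 0)) H; done.
Qed.

Lemma partial_le_Series (a : nat -> R) (M : nat) :
  (forall n, 0 <= a n) -> ex_series a -> sum_n a M <= Series a.
Proof.
move=> a0 ex.
apply: (is_lim_seq_incr_compare (sum_n a) (Series a)).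
- exact: Series_correct.
- by move=> n; rewrite sum_Sn; have := a0 n.+1; rewrite /plus /=; lra.
Qed.

Lemma lim_le_bound (u : nat -> R) (l B : R) :
  is_lim_seq u l -> (forall M, u M <= B) -> l <= B.
Proof.
move=> H HB; have := is_lim_seq_le _ _ _ _ HB H (is_lim_seq_const B); done.
Qed.

Lemma chi_abs (d l : nat) : Rabs (chi d l) <= 1.
Proof.
rewrite /chi; elim: (primes l) => [|p s IH] /=; first by rewrite Rabs_R1; lra.
rewrite Rabs_mult.
have hp : Rabs (chi_prime d p) <= 1.
  rewrite /chi_prime; repeat case: ifP => _; rewrite ?Rabs_R0 ?Rabs_R1 ?Rabs_Ropp ?Rabs_R1; lra.
have hpow : Rabs (chi_prime d p ^ logn p l) <= 1.
  rewrite -RPow_abs; elim: (logn p l) => [|e IHe] /=; first lra.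
  have := Rabs_pos (chi_prime d p); nra.
have := Rabs_pos (chi_prime d p ^ logn p l).
have := Rabs_pos (foldr (fun p0 acc => chi_prime d p0 ^ logn p0 l * acc) 1 s).
nra.
Qed.

Lemma exp_bound (y : R) : 0 <= y -> Rabs (exp (- y) - 1) <= 1 /\ Rabs (exp (- y) - 1) <= y.
Proof.
move=> y0.
have h1 : exp (- y) <= 1.
  case: (Rle_lt_or_eq_dec 0 y y0) => [yp|<-].
    by rewrite -exp_0; apply/Rlt_le/exp_increasing; lra.
  by rewrite Ropp_0 exp_0; lra.
have h2 := exp_ineq1_le (- y).
have h3 := exp_pos (- y).
rewrite Rabs_left1; last lra.
split; lra.
Qed.

Lemma u_ex (P : R) : 0 <= P -> ex_series (fun l => if smooth P l then / INR l else 0).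
Proof.
move=> P0; have [e1 [e2 e3]] := up_nat P P0.
set k := Z.to_nat (up P) in e1.
have Pk : P <= INR k by lra.
apply: (ex_series_bounded _ (2 ^ k)).
  by move=> n; case: ifP => _; [apply: inv_ge0 | lra].
move=> M; rewrite sum_n_big (_ : iota 0 M.+1 = 0%N :: iota 1 M) // big_consR.
have -> : (if smooth P 0 then / INR 0 else 0) = 0 by [].
rewrite Rplus_0_l; apply: Rle_trans (smooth_sum k M).
apply: big_ler => l _; case: ifP => Hs.
  by rewrite (smooth_smk _ _ _ Pk Hs); lra.
by case: ifP => _; [apply: inv_ge0 | lra].
Qed.

Lemma leRb_true a b : leRb a b = true -> a <= b.
Proof. by rewrite /leRb; case: Rle_dec. Qed.
Lemma leRb_false a b : leRb a b = false -> b < a.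
Proof. by rewrite /leRb; case: Rle_dec => // H _; lra. Qed.
Lemma ltRb_true a b : ltRb a b = true -> a < b.
Proof. by rewrite /ltRb; case: Rlt_dec. Qed.
Lemma ltRb_false a b : ltRb a b = false -> b <= a.
Proof. by rewrite /ltRb; case: Rlt_dec => // H _; lra. Qed.

Lemma count_le (s : R) (M : nat) : 0 <= s ->
  \big[Rplus/0]_(l <- iota 0 M.+1) (if (0 < l)%N && leRb (INR l) s then 1 else 0) <= s /\
  \big[Rplus/0]_(l <- iota 0 M.+1) (if (0 < l)%N && leRb (INR l) s then 1 else 0) <= INR M.
Proof.
move=> s0; elim: M => [|M [IH1 IH2]].
  by rewrite big_consR big_nil /=; lra.
rewrite iotaS0 big_catR (_ : (0 < M.+1)%N = true) //.
have SM := S_INR M.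
case E: (leRb (INR M.+1) s).
  have := leRb_true _ _ E; change (if true && true then 1 else 0) with 1; lra.
have := leRb_false _ _ E; change (if true && false then 1 else 0) with 0; lra.
Qed.

Lemma inner_bound (P N : R) (d : nat) : 2 <= P -> 1 <= N ->
  Rabs (inner_sum P N d) <= / sqrt N + tail_sum P N.
Proof.
move=> P2 N1.
set a := fun l => if smooth P l then chi d l / INR l * (exp (- INR l / N) - 1) else 0.
set u := fun l => if smooth P l then / INR l else 0.
set t := fun l => if ltRb (sqrt N) (INR l) && smooth P l then / INR l else 0.
set c := fun l => if (0 < l)%N && leRb (INR l) (sqrt N) then 1 else 0.
have exu : ex_series u by apply: u_ex; lra.
have u0 : forall l, 0 <= u l by move=> l; rewrite /u; case: ifP => _; [apply: inv_ge0 | lra].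
have t0 : forall l, 0 <= t l by move=> l; rewrite /t; case: ifP => _; [apply: inv_ge0 | lra].
have c0 : forall l, 0 <= c l by move=> l; rewrite /c; case: ifP => _; lra.
have ext : ex_series t.
  apply: (ex_series_le _ u) => // n; change (norm (t n)) with (Rabs (t n)).
  rewrite Rabs_pos_eq //.
  rewrite /t /u; case: ifP => [/andP [_ ->]|]; first lra.
  by move=> _; apply: u0.
have sN : 0 < sqrt N by apply: sqrt_lt_R0; lra.
have NN : sqrt N * sqrt N = N by apply: sqrt_sqrt; lra.
have term : forall l, Rabs (a l) <= / N * c l + t l.
  move=> l; rewrite /a /c /t.
  case: ifP => Hs; last first.
    rewrite Rabs_R0 andbF; case: ifP => _; have := Rinv_0_lt_compat N; lra.
  have l0 : (0 < l)%N by case/andP: Hs.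
  have lR : 0 < INR l by apply: lt_0_INR; lia.
  have Ny : 0 < N by lra.
  have y0 : 0 <= INR l / N by apply: Rmult_le_pos; [lra | apply/Rlt_le/Rinv_0_lt_compat].
  have [hb1 hb2] := exp_bound _ y0.
  rewrite (_ : - INR l / N = - (INR l / N)); last by field; lra.
  rewrite !Rabs_mult Rabs_inv (Rabs_pos_eq (INR l)); last lra.
  have hc := chi_abs d l.
  have hc0 := Rabs_pos (chi d l).
  have hl : 0 < / INR l by apply: Rinv_0_lt_compat.
  have he0 := Rabs_pos (exp (- (INR l / N)) - 1).
  rewrite l0 andbT.
  have key : Rabs (chi d l) * / INR l <= / INR l by nra.
  have key0 : 0 <= Rabs (chi d l) * / INR l by nra.
  case E: (leRb (INR l) (sqrt N)).
    have Hle := leRb_true _ _ E.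
    have : 0 <= (if ltRb (sqrt N) (INR l) then / INR l else 0).
      by case: ifP => _; [apply/Rlt_le | lra].
    have : Rabs (chi d l) * / INR l * Rabs (exp (- (INR l / N)) - 1) <= / INR l * (INR l / N).
      by apply: Rmult_le_compat.
    have -> : / INR l * (INR l / N) = / N by field; lra.
    change (if true && true then 1 else 0) with 1; move=> *; lra.
  have Hlt := leRb_false _ _ E.
  have -> : ltRb (sqrt N) (INR l) = true by rewrite /ltRb; case: Rlt_dec => // H; exfalso; lra.
  have : Rabs (chi d l) * / INR l * Rabs (exp (- (INR l / N)) - 1) <= / INR l * 1.
    by apply: Rmult_le_compat.
  change (if true && false then 1 else 0) with 0; lra.
have au : forall l, Rabs (a l) <= u l.
  move=> l; rewrite /a /u; case: ifP => Hs; last by rewrite Rabs_R0; lra.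
  have l0 : (0 < l)%N by case/andP: Hs.
  have lR : 0 < INR l by apply: lt_0_INR; lia.
  have y0 : 0 <= INR l / N by apply: Rmult_le_pos; [lra | apply/Rlt_le/Rinv_0_lt_compat; lra].
  have [hb1 hb2] := exp_bound _ y0.
  rewrite (_ : - INR l / N = - (INR l / N)); last by field; lra.
  rewrite !Rabs_mult Rabs_inv (Rabs_pos_eq (INR l)); last lra.
  have hc := chi_abs d l.
  have hc0 := Rabs_pos (chi d l).
  have hl : 0 < / INR l by apply: Rinv_0_lt_compat.
  have he0 := Rabs_pos (exp (- (INR l / N)) - 1).
  have h : Rabs (chi d l) * / INR l <= / INR l by nra.
  have h' : 0 <= Rabs (chi d l) * / INR l by nra.
  nra.
have exa : ex_series a.
  by apply: (ex_series_le _ u) => // n; change (norm (a n)) with (Rabs (a n)); apply: au.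
have psum : forall M, Rabs (sum_n a M) <= / sqrt N + Series t.
  move=> M; rewrite sum_n_big; apply: Rle_trans (big_abs _ _ _) _.
  apply: Rle_trans (big_ler _ _ _ _ (fun l _ => term l)) _.
  rewrite big_splitR big_mulr.
  have [cs _] := count_le (sqrt N) M (Rlt_le _ _ sN).
  have ht := partial_le_Series t M t0 ext; rewrite sum_n_big in ht.
  have : / N * \big[Rplus/0]_(i <- iota 0 M.+1) c i <= / N * sqrt N.
    apply: Rmult_le_compat_l => //; apply/Rlt_le/Rinv_0_lt_compat; lra.
  have -> : / N * sqrt N = / sqrt N by rewrite -{1}NN; field; lra.
  by move=> H; apply: Rplus_le_compat.
have HS := Series_correct _ exa.
have HS' : is_lim_seq (sum_n a) (Series a) by [].
have bnd : forall M, - (/ sqrt N + Series t) <= sum_n a M <= / sqrt N + Series t.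
  by move=> M; apply/Rabs_le_between; apply: psum.
rewrite /inner_sum -/a /tail_sum -/t; apply: Rabs_le; split.
  have HO : is_lim_seq (fun n => - sum_n a n) (- Series a).
    exact: (proj1 (is_lim_seq_opp (sum_n a) (Series a)) HS').
  suff : - Series a <= / sqrt N + Series t by lra.
  apply: (lim_le_bound _ _ _ HO) => M; have := bnd M; lra.
apply: (lim_le_bound _ _ _ HS') => M; have := bnd M; lra.
Qed.

Lemma tail_ge0 (P N : R) : 2 <= P -> 0 <= tail_sum P N.
Proof.
move=> P2.
set t := fun l => if ltRb (sqrt N) (INR l) && smooth P l then / INR l else 0.
have t0 : forall l, 0 <= t l by move=> l; rewrite /t; case: ifP => _; [apply: inv_ge0 | lra].
have ext : ex_series t.
  apply: (ex_series_le _ (fun l => if smooth P l then / INR l else 0)); last by apply: u_ex; lra.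
  move=> n; change (norm (t n)) with (Rabs (t n)); rewrite Rabs_pos_eq //.
  rewrite /t; case: ifP => [/andP [_ ->]|]; first lra.
  by move=> _; case: ifP => _; [apply: inv_ge0 | lra].
have := partial_le_Series t 0 t0 ext; rewrite sum_O; have := t0 0%N.
rewrite /tail_sum -/t; lra.
Qed.

Lemma Delta_bound (P N : R) (n : nat) : 2 <= P -> 1 <= N ->
  Rabs (Delta23 P N n) <= (/ sqrt N + tail_sum P N) * Fs n.
Proof.
move=> P2 N1.
set B := / sqrt N + tail_sum P N.
have B0 : 0 <= B.
  have := tail_ge0 P N P2; have : 0 < / sqrt N.
    by apply: Rinv_0_lt_compat; apply: sqrt_lt_R0; lra.
  rewrite /B; lra.
rewrite /Delta23 sumRE /Fs -big_mulr.
apply: Rle_trans (big_abs _ _ _) _.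
apply: big_ler => v _.
case: ifP => [/and3P [Hdv _ _]|_]; last first.
  rewrite Rabs_R0; apply: Rmult_le_pos => //; case: ifP => _; [apply: inv_ge0 | lra].
rewrite Hdv Rabs_mult Rabs_pos_eq; last by apply: inv_ge0.
rewrite Rmult_comm; apply: Rmult_le_compat_r; first by apply: inv_ge0.
exact: inner_bound.
Qed.

Lemma C1_pos K : 0 < C1 K.
Proof.
rewrite /C1; apply: Rmult_lt_0_compat; first by apply: Rmult_lt_0_compat; [lra | apply: pow_lt; lra].
apply: pow_lt; have := pos_INR (K + K).-1; lra.
Qed.

Theorem lemma3p3 (q : nat) (hq : (1 < q)%N) :
  exists C : R, 0 < C /\
  forall P x N : R, 2 <= P -> 1 <= x -> 1 <= N ->
    rpow (/ x * sum_n_le x (fun n => Rabs (Delta23 P N n) ^ (2 * q)))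
         (/ INR (2 * q))
    <= C * (/ sqrt N + tail_sum P N).
Proof.
set K := (2 * q)%N.
have K1 : (1 <= K)%N by rewrite /K; lia.
have C1p := C1_pos K.
have C01 : 1 <= 6 * C1 K.
  rewrite /C1.
  have h1 : 1 <= 10 ^ K by apply: pow_R1_Rle; lra.
  have h2 : 1 <= (1 + INR (K + K).-1) ^ (K + K).-1.
    by apply: pow_R1_Rle; have := pos_INR (K + K).-1; lra.
  have : 1 <= 10 ^ K * (1 + INR (K + K).-1) ^ (K + K).-1.
    by apply: (Rle_trans _ (1 * 1)); [lra | apply: Rmult_le_compat; lra].
  lra.
exists (6 * C1 K); split; first lra.
move=> P x N P2 x1 N1.
set B := / sqrt N + tail_sum P N.
have Bp : 0 < B.
  have := tail_ge0 P N P2; have : 0 < / sqrt N.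
    by apply: Rinv_0_lt_compat; apply: sqrt_lt_R0; lra.
  rewrite /B; lra.
have [e1 [e2 e3]] := up_nat x (ltac:(lra)).
set L := Z.to_nat (up x) in e1 *.
set S := sum_n_le x _.
have hS : S <= B ^ K * (C1 K * INR (L + 4)).
  rewrite /S /sum_n_le sumRE -/L.
  apply: Rle_trans (_ : _ <= \big[Rplus/0]_(n <- iota 3 L) (B ^ K * Fs n ^ K)) _.
    apply: big_ler => n _; case: ifP => _.
      rewrite -Rpow_mult_distr; apply: pow_incr; split; [apply: Rabs_pos | exact: Delta_bound].
    apply: Rmult_le_pos; [apply: pow_le; lra | apply: pow_le; apply: Fs_ge0].
  rewrite big_mulr; apply: Rmult_le_compat_l; [apply: pow_le; lra | exact: Fsum].
have BK : 0 < B ^ K by apply: pow_lt.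
have hL : INR (L + 4) <= 6 * x by rewrite plus_INR e1 (_ : INR 4 = 4); [lra | rewrite /=; ring].
have hy : / x * S <= 6 * C1 K * B ^ K.
  have x0 : 0 < / x by apply: Rinv_0_lt_compat; lra.
  apply: Rle_trans (Rmult_le_compat_l _ _ _ (Rlt_le _ _ x0) hS) _.
  have : B ^ K * (C1 K * INR (L + 4)) <= B ^ K * (C1 K * (6 * x)).
    apply: Rmult_le_compat_l; first lra.
    apply: Rmult_le_compat_l; lra.
  move=> H; apply: Rle_trans (Rmult_le_compat_l _ _ _ (Rlt_le _ _ x0) H) _.
  right; field; lra.
rewrite /rpow; case: Rle_dec => Hy.
  by apply: Rmult_le_pos; lra.
have Kp : 0 < INR K by apply: lt_0_INR; lia.
apply: Rle_trans (Rle_Rpower_l _ _ _ _ (conj (Rnot_le_lt _ _ Hy) hy)) _.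
  by apply/Rlt_le/Rinv_0_lt_compat.
rewrite -Rpower_mult_distr; [|lra|exact: BK].
rewrite -(Rpower_pow K B) // Rpower_mult Rinv_r; last lra.
rewrite Rpower_1 //.
apply: Rmult_le_compat_r; first lra.
apply: Rle_trans (_ : _ <= Rpower (6 * C1 K) 1) _; last by rewrite Rpower_1; lra.
apply: Rle_Rpower => //.
have : 1 <= INR K by apply: (le_INR 1); apply/leP.
move=> h; rewrite -Rinv_1; apply: Rinv_le_contravar; lra.
Qed.
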